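(* Let $G=(V,E)$ be a connected finite simple graph that is bijective, i.e. $G$ has exactly one cycle and this cycle has odd length; let $A$ be its incidence matrix and $\lambda\in\mathbb{R}_{>0}^n$, and let $\mu$ be the unique solution of $A\mu=\lambda$ (which is the vector of matching rates of the problem $(G,\lambda)$ under any stabilizing policy). Let $k\in E$. (i) If edge $k$ does not belong to the cycle of $G$, then removing $k$ separates $G$ into a tree and a unicyclic graph; letting $V_k\subseteq V$ be the node set of the tree part (which contains one endpoint of $k$), we have $\mu_k=\sum_{i\in V_k}(-1)^{d_{i,k}}\lambda_i$. (ii) If edge $k$ belongs to the cycle of $G$, then $\mu_k=\frac12\sum_{i\in V}(-1)^{d_{i,k}}\lambda_i$. Here $d_{i,k}$ denotes the minimum of the graph distances from node $i$ to the two endpoints of edge $k$.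
   Context: The incidence matrix $A$ of $G$ (with $V=\{1,\dots,n\}$, $E=\{e_1,\dots,e_m\}$) is the $n\times m$ matrix with $a_{i,k}=1$ if node $i$ is an endpoint of $e_k$ and $0$ otherwise; for a bijective graph $m=n$ and $A$ is invertible. The equation $A\mu=\lambda$ reads $\sum_{k\in E_i}\mu_k=\lambda_i$ for every node $i$, where $E_i$ is the set of edges incident to $i$. *)

(* Defs.v *)
From HB Require Import structures.
From mathcomp Require Import all_boot all_order all_algebra.
Set Implicit Arguments. Unset Strict Implicit. Unset Printing Implicit Defensive.
Import Order.TTheory GRing.Theory Num.Theory.

(* A finite simple graph on the vertex type T is given by a symmetric,
   irreflexive adjacency relation g : rel T.  Edges are 2-element vertex sets. *)

Definition simple_graph (T : finType) (g : rel T) : Prop :=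
  symmetric g /\ irreflexive g.

Definition connected_graph (T : finType) (g : rel T) : Prop :=
  forall x y : T, connect g x y.

Definition edges (T : finType) (g : rel T) : {set {set T}} :=
  [set k : {set T} | [exists x : T, exists y : T, g x y && (k == [set x; y])]].

Definition cycle_edges (T : finType) (p : seq T) : {set {set T}} :=
  [set [set xy.1; xy.2] | xy in zip p (rot 1 p)].

Definition is_cycle (T : finType) (g : rel T) (C : {set {set T}}) : Prop :=
  exists p : seq T, [/\ 3 <= size p, uniq p, cycle g p & C = cycle_edges p].

Definition bijective_graph (T : finType) (g : rel T) : Prop :=
  [/\ connected_graph g,
      exists C, is_cycle g C /\ (forall C', is_cycle g C' -> C' = C)
    & forall C, is_cycle g C -> odd #|C| ].

Definition walk_len (T : finType) (g : rel T) (n : nat) (x y : T) : bool :=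
  [exists p : n.-tuple T, path g x p && (last x p == y)].

(* graph distance: least n with a walk of length n (shortest paths in a
   connected graph have length < #|T|) *)
Definition dist (T : finType) (g : rel T) (x y : T) : nat :=
  find (fun n => walk_len g n x y) (iota 0 #|T|).

Definition dedge (T : finType) (g : rel T) (i u v : T) : nat :=
  minn (dist g i u) (dist g i v).

Definition remove_edge (T : finType) (g : rel T) (k : {set T}) : rel T :=
  fun x y => g x y && ([set x; y] != k).

Definition incidence_eq (R : nzRingType) (T : finType) (g : rel T)
    (mu : {set T} -> R) (lam : T -> R) : Prop :=
  forall i : T, (\sum_(k in edges g | i \in k) mu k)%R = lam i.

(* Main.v *)
Require Import Defs.
From HB Require Import structures.
From mathcomp Require Import all_boot all_order all_algebra zify.
Import Order.TTheory GRing.Theory Num.Theory.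
Set Implicit Arguments. Unset Strict Implicit. Unset Printing Implicit Defensive.

Lemma walk_lenP (T : finType) (g : rel T) n x y :
  reflect (exists p : seq T, [/\ size p = n, path g x p & last x p = y])
          (walk_len g n x y).
Proof.
apply: (iffP existsP) => [[t /andP[pt /eqP lt]]|[p [sp pp lp]]].
  by exists t; rewrite size_tuple.
have sp' : size p == n by rewrite sp.
by exists (Tuple sp'); rewrite /= pp lp eqxx.
Qed.

Lemma walk0 (T : finType) (g : rel T) x y : walk_len g 0 x y = (x == y).
Proof.
apply/walk_lenP/eqP => [[p [sp _ <-]]|<-]; last by exists [::].
by case: p sp.
Qed.

Lemma walkS (T : finType) (g : rel T) n x y z :
  g x y -> walk_len g n y z -> walk_len g n.+1 x z.
Proof.
move=> gxy /walk_lenP[p [sp pp lp]]; apply/walk_lenP.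
by exists (y :: p); rewrite /= sp gxy pp lp.
Qed.

Lemma walkS_inv (T : finType) (g : rel T) n x z :
  walk_len g n.+1 x z -> exists2 y, g x y & walk_len g n y z.
Proof.
move=> /walk_lenP[[|y p] [//= [sp] /andP[gxy pp] lp]].
by exists y => //; apply/walk_lenP; exists p.
Qed.

Lemma walk_conn (T : finType) (g : rel T) x y :
  connect g x y -> exists2 n, n < #|T| & walk_len g n x y.
Proof.
move=> /connectP[p pp ->].
case: (shortenP pp) => p' pp' up' _.
exists (size p').
  by have := card_uniqP up'; move=> /= <-; apply: max_card.
by apply/walk_lenP; exists p'.
Qed.

Lemma dist_walk (T : finType) (g : rel T) x y :
  connect g x y -> walk_len g (dist g x y) x y.
Proof.
move=> /walk_conn[n nT wn].
have hh : has (fun n => walk_len g n x y) (iota 0 #|T|).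
  by apply/hasP; exists n => //; rewrite mem_iota.
have := nth_find 0 hh.
by rewrite nth_iota ?add0n // -{2}(size_iota 0 #|T|) -has_find.
Qed.

Lemma dist_min (T : finType) (g : rel T) n x y :
  connect g x y -> walk_len g n x y -> (dist g x y <= n)%N.
Proof.
move=> cxy wn; rewrite leqNgt; apply/negP => lt.
have := walk_conn cxy => -[m mT _].
have nT : (n < #|T|)%N.
  apply: leq_trans lt _; rewrite /dist.
  by have := find_size (fun n => walk_len g n x y) (iota 0 #|T|); rewrite size_iota.
have := before_find 0 lt.
by rewrite nth_iota ?add0n // wn.
Qed.

Lemma dist_self (T : finType) (g : rel T) x : dist g x x = 0%N.
Proof. by apply/eqP; rewrite -leqn0; apply: dist_min => //; rewrite walk0. Qed.

Lemma dist0 (T : finType) (g : rel T) x y :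
  connected_graph g -> dist g x y = 0%N -> x = y.
Proof. by move=> cg d0; have := dist_walk (cg x y); rewrite d0 walk0 => /eqP. Qed.

Lemma dist_edge (T : finType) (g : rel T) x y z :
  connected_graph g -> g x y -> (dist g x z <= (dist g y z).+1)%N.
Proof.
move=> cg gxy; apply: dist_min => //; apply: walkS gxy _.
exact: dist_walk.
Qed.

Lemma dist_succ (T : finType) (g : rel T) x z n :
  connected_graph g -> dist g x z = n.+1 -> exists2 y, g x y & dist g y z = n.
Proof.
move=> cg dx; have := dist_walk (cg x z); rewrite dx => /walkS_inv[y gxy wy].
exists y => //; apply/eqP; rewrite eqn_leq dist_min //=.
by have := dist_edge z cg gxy; rewrite dx ltnS.
Qed.

Lemma dedge_self1 (T : finType) (g : rel T) u v : dedge g u u v = 0%N.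
Proof. by rewrite /dedge dist_self min0n. Qed.
Lemma dedge_self2 (T : finType) (g : rel T) u v : dedge g v u v = 0%N.
Proof. by rewrite /dedge dist_self minn0. Qed.

Lemma dedge0 (T : finType) (g : rel T) x u v :
  connected_graph g -> dedge g x u v = 0%N -> x = u \/ x = v.
Proof.
move=> cg; rewrite /dedge /minn; case: ifP => _ h.
  by left; apply: dist0 h.
by right; apply: dist0 h.
Qed.

Lemma dedge_edge (T : finType) (g : rel T) x y u v :
  connected_graph g -> g x y -> (dedge g x u v <= (dedge g y u v).+1)%N.
Proof.
move=> cg gxy; rewrite /dedge -minnSS leq_min.
by rewrite !geq_min !dist_edge ?orbT.
Qed.

Lemma dedge_succ (T : finType) (g : rel T) x u v n :
  connected_graph g -> dedge g x u v = n.+1 ->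
  exists2 y, g x y & dedge g y u v = n.
Proof.
move=> cg dx.
have [y gxy dy] : exists2 y, g x y & (dedge g y u v <= n)%N.
  move: dx; rewrite /dedge /minn; case: ifP => _ h.
    by have [y gxy dy] := dist_succ cg h; exists y; rewrite // geq_min dy leqnn.
  by have [y gxy dy] := dist_succ cg h; exists y; rewrite // geq_min dy leqnn orbT.
exists y => //; apply/eqP; rewrite eqn_leq dy /=.
by have := dedge_edge u v cg gxy; rewrite dx ltnS.
Qed.

Lemma zip_rcons_path (T : eqType) (e : rel T) x q y ab :
  path e x (rcons q y) -> ab \in zip (x :: q) (rcons q y) -> e ab.1 ab.2.
Proof.
elim: q x => [|z q IH] x /=.
  by rewrite andbT inE => exy /eqP ->.
move=> /andP[exz pz]; rewrite inE => /orP[/eqP -> //|].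
exact: IH.
Qed.

Lemma zip_cycle (T : eqType) (e : rel T) p ab :
  cycle e p -> ab \in zip p (rot 1 p) -> e ab.1 ab.2.
Proof.
case: p => [//|x q] /=; rewrite rot1_cons; exact: zip_rcons_path.
Qed.

Lemma zip_mem (T : eqType) (s t : seq T) ab :
  size s = size t -> ab \in zip s t -> ab.1 \in s /\ ab.2 \in t.
Proof.
move=> st hab; split.
  by rewrite -[s](@unzip1_zip _ _ s t) ?st // map_f.
by rewrite -[t](@unzip2_zip _ _ s t) ?st // map_f.
Qed.

Lemma cycle_edgesP (T : finType) (e : rel T) p k :
  cycle e p -> k \in cycle_edges p ->
  exists a b, [/\ e a b, k = [set a; b], a \in p & b \in p].
Proof.
move=> cp /imsetP[[a b] hab ->]; exists a, b.
have [ha hb] := zip_mem (esym (size_rot 1 p)) hab.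
by move: hb; rewrite /= mem_rot => hb; split => //; apply: (zip_cycle cp hab).
Qed.

Lemma cycle_remove (T : finType) (g : rel T) k C :
  is_cycle (remove_edge g k) C -> is_cycle g C /\ k \notin C.
Proof.
move=> [p [sp up cp ->]]; split.
  exists p; split => //; apply: sub_cycle cp => a b /andP[] //.
apply/negP => /(cycle_edgesP cp)[a [b [/andP[_ /negP hk] kab _ _]]].
by apply: hk; rewrite kab.
Qed.

Lemma cycle_from_conn (T : finType) (e : rel T) x y :
  x != y -> e x y -> connect (remove_edge e [set x; y]) y x ->
  exists p, [/\ 3 <= size p, uniq p, cycle e p, [set x; y] \in cycle_edges p
    & forall z, z \in p -> connect (remove_edge e [set x; y]) y z].
Proof.
move=> nxy exy /connectP[p0 pp0 l0].
case: (shortenP pp0) l0 => q pq uq _ {pp0 p0} lq.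
have sub : subrel (remove_edge e [set x; y]) e by move=> a b /andP[].
exists (y :: q); split => //.
- case/lastP: q pq uq lq => [_ _ /= lq|q0 z]; first by rewrite lq eqxx in nxy.
  rewrite last_rcons => pq _ zx; subst z; case: q0 pq => [|w q0] //=.
  by rewrite andbT /remove_edge setUC eqxx andbF.
  by rewrite size_rcons.
- rewrite /= rcons_path -lq exy andbT; exact: sub_path pq.
- case/lastP: q pq uq lq => [_ _ /= lq|q0 z]; first by rewrite lq eqxx in nxy.
  rewrite last_rcons => _ _ zx; subst z.
  rewrite /cycle_edges rot1_cons -rcons_cons zip_rcons ?size_rcons //.
  by apply/imsetP; exists (x, y); rewrite ?mem_rcons ?mem_head.
- move=> z hz; exact: path_connect pq z hz.
Qed.

Lemma modS1 n k : (k < n)%N -> ((k+1) %% n = if (k+1 < n)%N then k+1 else 0)%N.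
Proof.
move=> kn; case: ifP => h; first by rewrite modn_small.
have -> : (k + 1 = n)%N by lia.
by rewrite modnn.
Qed.

Lemma ar3 n i j : (3 <= n -> i < n -> j < n -> i = (j+1) %% n -> j = (i+1) %% n -> False)%N.
Proof. move=> n3 ilt jlt; rewrite (@modS1 n i ilt) (@modS1 n j jlt).
case: (ltnP (i+1) n) => h1; case: (ltnP (j+1) n) => h2; lia. Qed.

Lemma nth_rot1 (T : Type) x0 (p : seq T) i :
  (i < size p)%N -> nth x0 (rot 1 p) i = nth x0 p ((i+1) %% size p).
Proof.
case: p => [//|x q] /= hi; rewrite rot1_cons nth_rcons modS1 //.
case: (ltnP i (size q)) => h.
  have -> : (i + 1 < (size q).+1)%N by lia.
  by rewrite addn1.
have -> : i = size q by lia.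
by rewrite eqxx addn1 ltnn.
Qed.

Lemma mem_zip_rot (T : eqType) (p : seq T) a b :
  (a, b) \in zip p (rot 1 p) ->
  exists2 i, (i < size p)%N & forall x0, a = nth x0 p i /\ b = nth x0 p ((i+1) %% size p).
Proof.
move=> hab.
have sz : size (zip p (rot 1 p)) = size p by rewrite size_zip size_rot minnn.
have hi := hab; rewrite -index_mem sz in hi.
exists (index (a, b) (zip p (rot 1 p))) => //.
have := nth_index (a, b) hab; rewrite nth_zip ?size_rot // => -[e1 e2].
move=> x0; split; first by rewrite -{1}e1; apply: set_nth_default.
rewrite -{1}e2 nth_rot1 //.
apply: set_nth_default; rewrite ltn_mod; by case: p hi {hab sz e1 e2}.
Qed.

Lemma set2_eq (T : finType) (a b c d : T) :
  [set a; b] = [set c; d] -> (a = c /\ b = d) \/ (a = d /\ b = c) \/ (a = b /\ c = d /\ a = c).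
Proof.
move=> E.
have ha : a \in [set c; d] by rewrite -E !inE eqxx.
have hb : b \in [set c; d] by rewrite -E !inE eqxx orbT.
have hc : c \in [set a; b] by rewrite E !inE eqxx.
have hd : d \in [set a; b] by rewrite E !inE eqxx orbT.
move: ha hb hc hd; rewrite !inE.
by do 4 (case/orP => /eqP ?); subst; auto.
Qed.

Lemma card_cycle_edges (T : finType) (p : seq T) :
  uniq p -> (3 <= size p)%N -> #|cycle_edges p| = size p.
Proof.
move=> up sp.
have sz : size (zip p (rot 1 p)) = size p by rewrite size_zip size_rot minnn.
have uz : uniq (zip p (rot 1 p)).
  apply: (@map_uniq _ _ fst); rewrite -/(unzip1 _) unzip1_zip ?size_rot //.
rewrite /cycle_edges card_in_imset; first by rewrite (card_uniqP uz) sz.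
move=> [a b] [c d] /mem_zip_rot[i ip /(_ a) [ea eb]] /mem_zip_rot[j jp /(_ a) [ec ed]] /= E.
have nij : forall k l, (k < size p)%N -> (l < size p)%N -> nth a p k = nth a p l -> k = l.
  by move=> k l kp lp /eqP; rewrite nth_uniq // => /eqP.
have modlt : forall k, ((k + 1) %% size p < size p)%N by move=> k; rewrite ltn_mod; case: (p) sp.
case: (set2_eq E) => [[-> ->] //|[[ad bc]|[ab [cd ac]]]].
- exfalso; apply: (ar3 sp ip jp).
  + by apply: nij => //; rewrite -ea -ed ad.
  + by apply: nij => //; rewrite -ec -eb bc.
- by rewrite -ab -cd -ac.
Qed.

Definition desc (T : finType) (g : rel T) (u v x : T) : T :=
  odflt x [pick y | g x y && (dedge g y u v == (dedge g x u v).-1)].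

Lemma desc_prop (T : finType) (g : rel T) u v x :
  connected_graph g -> (0 < dedge g x u v)%N ->
  g x (desc g u v x) /\ dedge g (desc g u v x) u v = (dedge g x u v).-1.
Proof.
move=> cg; case E: (dedge g x u v) => [//|n] _.
rewrite /desc; case: pickP => [y /andP[gxy /eqP ->]|none] /=; first by rewrite E.
have [y gxy dy] := dedge_succ cg E.
by have := none y; rewrite gxy dy E eqxx.
Qed.

Lemma iter_desc (T : finType) (g : rel T) u v x i :
  connected_graph g -> (i <= dedge g x u v)%N ->
  dedge g (iter i (desc g u v) x) u v = (dedge g x u v - i)%N.
Proof.
move=> cg; elim: i => [|i IH] hi; first by rewrite subn0.
rewrite iterS; have IH' := IH (ltnW hi).
have pos : (0 < dedge g (iter i (desc g u v) x) u v)%N by rewrite IH'; lia.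
have [_ ->] := desc_prop cg pos.
rewrite IH'; lia.
Qed.

Lemma iter_desc_step (T : finType) (g : rel T) u v x i :
  connected_graph g -> (i < dedge g x u v)%N ->
  g (iter i (desc g u v) x) (iter i.+1 (desc g u v) x).
Proof.
move=> cg hi; rewrite iterS.
have pos : (0 < dedge g (iter i (desc g u v) x) u v)%N.
  rewrite iter_desc //; [lia | exact: ltnW].
by have [] := desc_prop cg pos.
Qed.

Lemma path_traject (T : Type) (h : rel T) (f : T -> T) x n :
  (forall i, (i < n)%N -> h (iter i f x) (iter i.+1 f x)) ->
  path h x (traject f (f x) n).
Proof.
elim: n x => [//|n IH] x H; rewrite trajectS /=.
rewrite (H 0%N) //=; apply: IH => i hi.
by rewrite -!iterSr; apply: H.
Qed.

Lemma desc_end (T : finType) (g : rel T) u v x :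
  connected_graph g ->
  let y := iter (dedge g x u v) (desc g u v) x in y = u \/ y = v.
Proof. by move=> cg /=; apply: (dedge0 cg); rewrite iter_desc // subnn. Qed.

Lemma remove_sym (T : finType) (g : rel T) k :
  symmetric g -> symmetric (remove_edge g k).
Proof. by move=> sg x y; rewrite /remove_edge sg setUC. Qed.

Lemma chain_conn (T : finType) (g h : rel T) u v x :
  connected_graph g ->
  (forall y, (0 < dedge g y u v)%N -> h y (desc g u v y)) ->
  connect h x (iter (dedge g x u v) (desc g u v) x).
Proof.
move=> cg H; apply/connectP; exists (traject (desc g u v) (desc g u v x) (dedge g x u v)).
  apply: path_traject => i hi; rewrite iterS; apply: H.
  rewrite iter_desc //; [lia | exact: ltnW].
by rewrite last_traject.
Qed.

Lemma step_ok (T : finType) (g : rel T) u v a b y :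
  connected_graph g -> dedge g a u v = dedge g b u v ->
  (0 < dedge g y u v)%N ->
  remove_edge (remove_edge g [set u; v]) [set a; b] y (desc g u v y).
Proof.
move=> cg dab dy; have [gy dfy] := desc_prop cg dy.
rewrite /remove_edge gy /=; apply/andP; split; apply/eqP.
- move=> E; have : y \in [set u; v] by rewrite -E !inE eqxx.
  by rewrite !inE => /orP[] /eqP yuv; move: dy; rewrite yuv ?dedge_self1 ?dedge_self2.
- move=> /set2_eq [[ya fb]|[[yb fa]|[yf _]]].
  + subst y; by move: dfy dy; rewrite fb -dab; lia.
  + subst y; by move: dfy dy; rewrite fa dab; lia.
  + by move: dfy dy; rewrite -yf; lia.
Qed.

Lemma even_cycle (T : finType) (g : rel T) u v a b :
  symmetric g -> connected_graph g -> g u v -> g a b ->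
  dedge g a u v = dedge g b u v -> (0 < dedge g a u v)%N ->
  iter (dedge g a u v) (desc g u v) a != iter (dedge g a u v) (desc g u v) b ->
  exists C', is_cycle g C' /\ ~~ odd #|C'|.
Proof.
move=> sg cg guv gab dab m0.
set f := desc g u v; set m := dedge g a u v => na'b'.
set A := traject f a m.+1; set B := traject f b m.+1.
have ea : let y := iter m f a in y = u \/ y = v by exact: desc_end.
have eb : let y := iter m f b in y = u \/ y = v by rewrite /m dab; exact: desc_end.
have ga'b' : g (iter m f a) (iter m f b).
  move: na'b'; case: ea => /= ->; case: eb => /= ->; rewrite ?eqxx //.
  by rewrite sg.
have dA : forall i, (i <= m)%N -> dedge g (iter i f a) u v = (m - i)%N.
  by move=> i hi; rewrite iter_desc.
have dB : forall i, (i <= m)%N -> dedge g (iter i f b) u v = (m - i)%N.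
  by move=> i hi; rewrite iter_desc -?dab.
have uA : uniq A.
  rewrite /A looping_uniq; apply/trajectP => -[i hi E].
  by have := dA m (leqnn m); rewrite E dA ?subnn; lia.
have uB : uniq B.
  rewrite /B looping_uniq; apply/trajectP => -[i hi E].
  by have := dB m (leqnn m); rewrite E dB ?subnn; lia.
have dis : ~~ has (mem A) (rev B).
  rewrite has_rev; apply/hasPn => y /trajectP[j hj ->]; apply/negP.
  move=> /trajectP[i hi E].
  have ij : i = j.
    have h2 := dB j (ltnSE hj); rewrite E dA in h2; [lia | exact: ltnSE].
  subst j; move: na'b'; rewrite -(subnK (ltnSE hi)) !iterD E eqxx //.
exists (cycle_edges (A ++ rev B)); split; last first.
  rewrite card_cycle_edges ?size_cat ?size_rev ?size_traject; first by rewrite addnn odd_double.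
    by rewrite cat_uniq uA dis rev_uniq uB.
  lia.
exists (A ++ rev B); split => //.
- by rewrite size_cat size_rev !size_traject; lia.
- by rewrite cat_uniq uA dis rev_uniq uB.
rewrite /A trajectS /= rcons_cat cat_path; apply/andP; split.
  by apply: path_traject => i hi; apply: iter_desc_step.
rewrite last_traject -rev_cons lastI rev_rcons /=.
set t := traject f (f b) m.
have lt : last b t = iter m f b by rewrite /t last_traject.
apply/andP; split; first by rewrite lt.
change (path g (last a (b :: t)) (rev (belast a (b :: t)))).
rewrite rev_path.
rewrite (@eq_path _ _ g); last by move=> x y; rewrite /= sg.
rewrite /= gab /=.
rewrite /t; apply: path_traject => i hi; apply: iter_desc_step => //; rewrite -dab. exact: hi.
Qed.

Lemma same_end (T : finType) (g : rel T) u v a b :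
  symmetric g -> connected_graph g ->
  dedge g a u v = dedge g b u v ->
  iter (dedge g a u v) (desc g u v) a = iter (dedge g a u v) (desc g u v) b ->
  connect (remove_edge (remove_edge g [set u; v]) [set a; b]) b a.
Proof.
move=> sg cg dab E.
have ssym : connect_sym (remove_edge (remove_edge g [set u; v]) [set a; b]).
  by apply: sym_connect_sym; do 2 apply: remove_sym.
have ca := chain_conn a cg (fun y => @step_ok _ _ _ _ _ _ y cg dab).
have cb := chain_conn b cg (fun y => @step_ok _ _ _ _ _ _ y cg dab).
rewrite -dab -E in cb.
by apply: connect_trans cb _; rewrite ssym.
Qed.

Local Open Scope ring_scope.

Lemma swap_sum (R : comNzRingType) (T : finType) (g : rel T) (mu : {set T} -> R)
  (lam : T -> R) (P : pred T) (s : T -> R) :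
  incidence_eq g mu lam ->
  \sum_(i | P i) s i * lam i = \sum_(e in edges g) mu e * \sum_(i | P i && (i \in e)) s i.
Proof.
move=> inc.
under eq_bigr => i _ do rewrite -(inc i) mulr_sumr.
rewrite (exchange_big_dep (mem (edges g))) /=; last by move=> i e _ /andP[].
apply: eq_bigr => e ee; rewrite mulr_sumr; apply: eq_big => [i|i _].
  by rewrite ee.
by rewrite mulrC.
Qed.

Lemma sum_pair (R : nzRingType) (T : finType) (P : pred T) (s : T -> R) a b :
  a != b ->
  \sum_(i | P i && (i \in [set a; b])) s i =
  (if P a then s a else 0) + (if P b then s b else 0).
Proof.
move=> nab.
rewrite (eq_bigl (fun i => (i \in [set a; b]) && P i)); last by move=> i; rewrite andbC.
by rewrite big_mkcondr /= big_setU1 ?big_set1 //= inE.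
Qed.

Lemma edges_pair (T : finType) (g : rel T) e :
  e \in edges g -> exists a b, g a b /\ e = [set a; b].
Proof.
by rewrite inE => /existsP[a /existsP[b /andP[gab /eqP ->]]]; exists a, b.
Qed.

Lemma sign_adj (R : nzRingType) (m n : nat) :
  (m <= n.+1)%N -> (n <= m.+1)%N -> m != n -> (-1) ^+ m + (-1) ^+ n = 0 :> R.
Proof.
move=> h1 h2 h3.
have [-> | ->] : m = n.+1 \/ n = m.+1 by lia.
  by rewrite exprS mulN1r addNr.
by rewrite exprS mulN1r addrN.
Qed.

Unset Implicit Arguments.

Theorem proposition4p1 (R : realFieldType) (T : finType) (g : rel T)
  (lam : T -> R) (mu : {set T} -> R) :
  simple_graph g -> bijective_graph g ->
  (forall i, 0 < lam i) ->
  incidence_eq g mu lam ->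
  forall u v : T, g u v ->
  forall C : {set {set T}}, is_cycle g C ->
  (* (i) k = {u,v} not on the cycle; Vk = tree part of G - k *)
  ([set u; v] \notin C ->
     forall (w : T) (Vk : {set T}),
       w \in [set u; v] ->
       Vk = [set x | connect (remove_edge g [set u; v]) w x] ->
       (forall C', is_cycle (remove_edge g [set u; v]) C' ->
          ~ (forall k', k' \in C' -> k' \subset Vk)) ->
       mu [set u; v] = \sum_(i in Vk) (-1) ^+ dedge g i u v * lam i)
  /\
  (* (ii) k = {u,v} on the cycle *)
  ([set u; v] \in C ->
     mu [set u; v] = 2^-1 * \sum_(i : T) (-1) ^+ dedge g i u v * lam i).
Proof.
move=> [sg ig] [cg [C0 [iC0 uC0]] oddC] _ inc u v guv C iC.
have CC0 : C = C0 := uC0 C iC.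
have nuv : u != v by apply/eqP => E; rewrite E ig in guv.
have kE : [set u; v] \in edges g.
  by rewrite inE; apply/existsP; exists u; apply/existsP; exists v; rewrite guv eqxx.
have m0 : forall a b, g a b -> [set a; b] != [set u; v] ->
    dedge g a u v = dedge g b u v -> (0 < dedge g a u v)%N.
  move=> a b gab nk dab; case E: (dedge g a u v) => [|m] //.
  have nab : a != b by apply/eqP => E'; rewrite E' ig in gab.
  move: dab; rewrite E => /esym Eb.
  case: (dedge0 cg E) => ea; case: (dedge0 cg Eb) => eb; subst a b.
  - by rewrite eqxx in nab.
  - by rewrite eqxx in nk.
  - by rewrite setUC eqxx in nk.
  - by rewrite eqxx in nab.
have parity : forall a b, g a b -> dedge g a u v != dedge g b u v ->
    (-1) ^+ dedge g a u v + (-1) ^+ dedge g b u v = 0 :> R.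
  move=> a b gab; apply: sign_adj; apply: dedge_edge => //; by rewrite sg.
have nconn : connect (remove_edge g [set u; v]) v u -> [set u; v] \in C.
  move=> c; have [p [p3 up cp kp _]] := cycle_from_conn nuv guv c.
  have : is_cycle g (cycle_edges p) by exists p.
  by move/uC0 => E; rewrite CC0 -E.
set G' := remove_edge g [set u; v].
have ssym : connect_sym G' by apply: sym_connect_sym; apply: remove_sym.
split.
- move=> kC w Vk wk VkE Hac.
  have nc : ~ connect G' u v.
    by move=> c; apply: (negP kC); apply: nconn; rewrite ssym.
  have inV : forall x, (x \in Vk) = connect G' w x by move=> x; rewrite VkE inE.
  rewrite (@swap_sum _ _ g mu lam (fun i => i \in Vk) (fun x => (-1) ^+ dedge g x u v)) //.
  rewrite (bigD1 [set u; v]) //= (sum_pair (fun i => i \in Vk)) //.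
  have -> : (if u \in Vk then (-1) ^+ dedge g u u v else 0) +
            (if v \in Vk then (-1) ^+ dedge g v u v else 0) = 1 :> R.
    rewrite !inV; move: wk; rewrite !inE => /orP[] /eqP ->.
      rewrite connect0 dedge_self1 expr0; case: ifP => c; [by case: (nc c) | by rewrite addr0].
    rewrite connect0 dedge_self2 expr0; case: ifP => c; last by rewrite add0r.
    by case: nc; rewrite ssym.
  rewrite mulr1 big1 ?addr0 //.
  move=> e /andP[eE ne].
  have [a [b [gab ee]]] := edges_pair eE; subst e.
  have nab : a != b by apply/eqP => E'; rewrite E' ig in gab.
  have G'ab : G' a b by rewrite /G' /remove_edge gab ne.
  have G'ba : G' b a by rewrite /G' /remove_edge sg gab setUC ne.
  rewrite (sum_pair (fun i => i \in Vk)) //=.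
  case ha: (a \in Vk); case hb: (b \in Vk).
  - rewrite parity ?mulr0 //; apply/eqP => dab.
    have pos := m0 a b gab ne dab.
    case: (eqVneq (iter (dedge g a u v) (desc g u v) a)
                  (iter (dedge g a u v) (desc g u v) b)) => E.
      have c := same_end sg cg dab E.
      have [p [p3 up cp _ pV]] := cycle_from_conn nab G'ab c.
      have iC' : is_cycle G' (cycle_edges p) by exists p.
      apply: (Hac _ iC') => k' /(cycle_edgesP cp)[x [y [_ -> xp yp]]].
      have inp : forall z, z \in p -> z \in Vk.
        move=> z /pV cz; rewrite inV; apply: connect_trans (_ : connect G' w b) _.
          by rewrite -inV.
        by apply: connect_sub cz => x1 y1 /andP[h _]; apply: connect1.
      by apply/subsetP => z; rewrite !inE => /orP[] /eqP ->; apply: inp.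
    have stepG : forall y, (0 < dedge g y u v)%N -> G' y (desc g u v y).
      by move=> y hy; have /andP[] := @step_ok _ _ _ _ _ _ y cg dab hy.
    have ca := chain_conn a cg stepG.
    have cb := chain_conn b cg stepG.
    rewrite -dab in cb.
    have a'V : iter (dedge g a u v) (desc g u v) a \in Vk.
      by rewrite inV; apply: connect_trans ca; rewrite -inV.
    have b'V : iter (dedge g a u v) (desc g u v) b \in Vk.
      by rewrite inV; apply: connect_trans cb; rewrite -inV.
    have ea := desc_end u v a cg.
    have eb := desc_end u v b cg; rewrite -dab in eb.
    have [uV vV] : u \in Vk /\ v \in Vk.
      move: E a'V b'V; case: ea => /= ->; case: eb => /= -> //; by rewrite eqxx.
    case: nc; apply: connect_trans (_ : connect G' w v); last by rewrite -inV.
    by rewrite ssym -inV.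
  - have : b \in Vk by rewrite inV; apply: connect_trans (connect1 G'ab); rewrite -inV.
    by rewrite hb.
  - have : a \in Vk by rewrite inV; apply: connect_trans (connect1 G'ba); rewrite -inV.
    by rewrite ha.
  - by rewrite addr0 mulr0.
- move=> kC.
  rewrite (@swap_sum _ _ g mu lam xpredT (fun x => (-1) ^+ dedge g x u v)) //.
  rewrite (bigD1 [set u; v]) // (sum_pair xpredT) // /= dedge_self1 dedge_self2 expr0.
  rewrite big1 ?addr0; last first.
    move=> e /andP[eE ne].
    have [a [b [gab ee]]] := edges_pair eE; subst e.
    have nab : a != b by apply/eqP => E'; rewrite E' ig in gab.
    rewrite (sum_pair xpredT) //= parity ?mulr0 //; apply/eqP => dab.
    have pos := m0 a b gab ne dab.
    case: (eqVneq (iter (dedge g a u v) (desc g u v) a)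
                  (iter (dedge g a u v) (desc g u v) b)) => E.
      have c := same_end sg cg dab E.
      have G'ab : G' a b by rewrite /G' /remove_edge gab ne.
      have [p [p3 up cp _ _]] := cycle_from_conn nab G'ab c.
      have : is_cycle G' (cycle_edges p) by exists p.
      move=> /cycle_remove[/uC0 E1 nk].
      by rewrite E1 -CC0 kC in nk.
    have [C' [iC' eC']] := even_cycle sg cg guv gab dab pos E.
    by rewrite oddC in eC'.
  have h2 : (2 : R) != 0 by rewrite pnatr_eq0.
  by rewrite mulrCA -[1 + 1]/(2%:R) mulVf ?mulr1.
Qed.
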